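(* Let $\psi$ be the morphism on $\{a,b,c\}$ given by $\psi(a)=aabc$, $\psi(b)=bacaaabc$, $\psi(c)=bacabacabaca$. Then the infinite fixed points $\lim_n\psi^n(a)$ and $\lim_n\psi^n(b)$ of $\psi$ are $7$-automatic.
   Context: For an integer $q\ge 2$, a sequence is $q$-automatic if it is the image under a letter-to-letter map of a fixed point of a morphism all of whose letter-images have length $q$. *)

(* Defs.v *)
From mathcomp Require Import all_boot.
Set Implicit Arguments. Unset Strict Implicit. Unset Printing Implicit Defensive.

Inductive letter := la | lb | lc.

Definition psi (x : letter) : seq letter :=
  match x with
  | la => [:: la; la; lb; lc]
  | lb => [:: lb; la; lc; la; la; la; lb; lc]
  | lc => [:: lb; la; lc; la; lb; la; lc; la; lb; la; lc; la]
  end.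

Definition psi_word (s : seq letter) : seq letter := flatten (map psi s).

Definition prefix_of (s : seq letter) (w : nat -> letter) : Prop :=
  forall i, i < size s -> w i = nth la s i.

(* w = lim_n psi^n(x): every psi^n(x) is a prefix of w
   (the lengths |psi^n(x)| tend to infinity for x = a, b). *)
Definition is_psi_limit (x : letter) (w : nat -> letter) : Prop :=
  forall n, prefix_of (iter n psi_word [:: x]) w.

(* q-automatic: image under a letter-to-letter map tau of a fixed point u of
   a q-uniform morphism sigma on a finite alphabet A.  u = sigma(u) means
   u(q n + j) = (sigma (u n))_j for all n and j < q. *)
Definition automatic (q : nat) (B : Type) (w : nat -> B) : Prop :=
  2 <= q /\
  exists (A : finType) (sigma : A -> 'I_q -> A) (u : nat -> A) (tau : A -> B),
    (forall n (j : 'I_q), u (q * n + j) = sigma (u n) j) /\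
    (forall n, w n = tau (u n)).

(* Main.v *)
Require Import Defs.
From mathcomp Require Import all_boot.
From mathcomp Require Import zify.

Definition sv (c : nat) : seq nat :=
  match c with
  | 0 => [:: 0; 0; 1; 2; 3; 4; 5]
  | 2 => [:: 0; 0; 1; 2; 3; 4; 5]
  | _ => [:: 1; 2; 0; 3; 4; 5; 0]
  end.

Definition gw (c : nat) : seq letter :=
  match c with
  | 0 => [:: la; la; lb; lc]
  | 2 => [:: la; la; lb; lc]
  | _ => [:: lb; la; lc; la]
  end.

Definition cellsof (x : letter) : seq nat :=
  match x with la => [:: 0] | lb => [:: 1; 2] | lc => [:: 3; 4; 5] end.

Definition cells (s : seq letter) := flatten (map cellsof s).
Definition sigw (c : seq nat) := flatten (map sv c).

Lemma L1 s : psi_word s = flatten (map gw (cells s)).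
Proof.
elim: s => [|x s IH] //=.
rewrite /psi_word /= -/(psi_word s) IH /cells /= map_cat flatten_cat.
by case: x.
Qed.

Lemma cells_cat s1 s2 : cells (s1 ++ s2) = cells s1 ++ cells s2.
Proof. by rewrite /cells map_cat flatten_cat. Qed.

Lemma L2 s : cells (psi_word s) = sigw (cells s).
Proof.
elim: s => [|x s IH] //=.
rewrite /psi_word /= -/(psi_word s) cells_cat IH /sigw /cells /= map_cat flatten_cat.
by case: x.
Qed.

Lemma L3 (T : Type) (d : T) n (bs : seq (seq T)) k r :
  all (fun b => size b == n) bs -> k < size bs -> r < n ->
  nth d (flatten bs) (n * k + r) = nth d (nth [::] bs k) r.
Proof.
elim: bs k => [|b bs IH] k //= /andP [/eqP Hb Hall] Hk Hr.
rewrite /= nth_cat Hb.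
case: k Hk => [|k] Hk.
  by rewrite muln0 add0n Hr.
have -> : (n * k.+1 + r < n) = false by apply/negbTE; rewrite -leqNgt; nia.
have -> : n * k.+1 + r - n = n * k + r by nia.
by apply: IH.
Qed.

Lemma size_flat (T : Type) n (bs : seq (seq T)) :
  all (fun b => size b == n) bs -> size (flatten bs) = n * size bs.
Proof.
elim: bs => [|b bs IH] /=; first by rewrite muln0.
by move=> /andP [/eqP Hb H]; rewrite size_cat Hb IH // mulnS.
Qed.

Arguments size_flat {T n bs}.
Arguments L3 {T} d {n bs k r}.

Lemma all_sv c : all (fun b => size b == 7) (map sv c).
Proof. by elim: c => [|x c IH] //=; rewrite IH andbT; do 6!(case: x => [|x] //). Qed.

Lemma all_gw c : all (fun b => size b == 4) (map gw c).
Proof. by elim: c => [|x c IH] //=; rewrite IH andbT; do 6!(case: x => [|x] //). Qed.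

Lemma sv_lt c t : nth 0 (sv c) t < 6.
Proof.
have H : all (fun x => x < 6) (sv c) by do 6!(case: c => [|c] //).
case: (ltnP t (size (sv c))) => Ht.
  by move/allP: H; apply; apply: mem_nth.
by rewrite nth_default.
Qed.

Fixpoint vf (s : nat) (k n : nat) : nat :=
  match k with
  | 0 => s
  | k'.+1 => if n == 0 then s else nth 0 (sv (vf s k' (n %/ 7))) (n %% 7)
  end.

Lemma vf_stable s k1 : forall k2 n, n <= k1 -> n <= k2 -> vf s k1 n = vf s k2 n.
Proof.
elim: k1 => [|k1 IH] [|k2] n /= H1 H2.
- by [].
- by move: H1; rewrite leqn0 => /eqP ->.
- by move: H2; rewrite leqn0 => /eqP ->.
- case: eqP => // Hn. rewrite (IH k2) //; move/eqP: Hn; lia.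
Qed.

Definition v s n := vf s n n.

Lemma v0 s : v s 0 = s.
Proof. by []. Qed.

Lemma v_rec s q t : nth 0 (sv s) 0 = s -> t < 7 ->
  v s (7 * q + t) = nth 0 (sv (v s q)) t.
Proof.
move=> Hs Ht.
case E: (7 * q + t) => [|n].
  have -> : q = 0 by lia.
  have -> : t = 0 by lia.
  by rewrite v0 Hs.
rewrite /v /= -E.
have -> : (7 * q + t) %/ 7 = q by rewrite E; lia.
have -> : (7 * q + t) %% 7 = t by rewrite E; lia.
congr (nth 0 (sv _) t).
apply: vf_stable => //; lia.
Qed.

Lemma v_lt s n : s < 6 -> v s n < 6.
Proof.
rewrite /v; case: n => [|n] //= Hs.
by apply: sv_lt.
Qed.

Definition prefV s (c : seq nat) := forall k, k < size c -> nth 0 c k = v s k.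

Lemma L4 s c : nth 0 (sv s) 0 = s -> prefV s c -> prefV s (sigw c).
Proof.
move=> Hs Hc i.
rewrite /sigw (size_flat (all_sv c)) size_map => Hi.
have Ei : i = 7 * (i %/ 7) + i %% 7 by rewrite {1}(divn_eq i 7); lia.
have Hk : i %/ 7 < size c by lia.
have Hr : i %% 7 < 7 by apply: ltn_pmod.
rewrite Ei (L3 _ (all_sv c)) ?size_map //.
rewrite (nth_map 0) // Hc // v_rec //.
Qed.

Definition A : finType := ('I_6 * 'I_4)%type.

Definition uu s (n : nat) : A := (inord (v s (n %/ 4)), inord (n %% 4)).

Definition sig (p : A) (j : 'I_7) : A :=
  (inord (nth 0 (sv p.1) ((7 * p.2 + j) %/ 4)), inord ((7 * p.2 + j) %% 4)).

Definition tau (p : A) : letter := nth la (gw p.1) p.2.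

Lemma uu_fix s n (j : 'I_7) : nth 0 (sv s) 0 = s -> s < 6 ->
  uu s (7 * n + j) = sig (uu s n) j.
Proof.
move=> Hs Hs6.
rewrite /uu /sig /= !inordK ?v_lt //; last by apply: ltn_pmod.
have Hj := ltn_ord j.
have Hn : n = 4 * (n %/ 4) + n %% 4 by rewrite {1}(divn_eq n 4); lia.
have Hr : n %% 4 < 4 by apply: ltn_pmod.
set q := n %/ 4 in Hn *; set r := n %% 4 in Hn Hr *.
have -> : (7 * n + j) %/ 4 = 7 * q + (7 * r + j) %/ 4 by rewrite Hn; lia.
have -> : (7 * n + j) %% 4 = (7 * r + j) %% 4 by rewrite Hn; lia.
rewrite v_rec //; lia.
Qed.

Lemma iter_cells x m : cells (iter m psi_word [:: x]) = iter m sigw (cells [:: x]).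
Proof. by elim: m => [|m IH] //=; rewrite L2 IH. Qed.

Lemma size_sigw c : size (sigw c) = 7 * size c.
Proof. by rewrite /sigw (size_flat (all_sv c)) size_map. Qed.

Lemma pref_iter s c m : nth 0 (sv s) 0 = s -> prefV s c -> prefV s (iter m sigw c).
Proof. move=> Hs Hc; elim: m => [|m IH] //=; exact: L4. Qed.

Lemma size_iter c m : size (iter m sigw c) = 7 ^ m * size c.
Proof. elim: m => [|m IH] /=; first by rewrite mul1n. by rewrite size_sigw IH expnS mulnA. Qed.

Lemma main x s w : nth 0 (sv s) 0 = s -> s < 6 -> prefV s (cells [:: x]) ->
  0 < size (cells [:: x]) ->
  is_psi_limit x w -> automatic 7 w.
Proof.
move=> Hs Hs6 Hx Hsz Hw; split => //.
exists A, sig, (uu s), tau; split.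
  by move=> n j; apply: uu_fix.
move=> i.
set c := iter i sigw (cells [:: x]).
have Hpre : prefV s c by apply: pref_iter.
have Hsc : i < size c.
  rewrite /c size_iter.
  have := ltn_expl i (isT : 1 < 7). move: Hsz; nia.
have Hi : i < size (iter i.+1 psi_word [:: x]).
  rewrite /= L1 iter_cells -/c (size_flat (all_gw _)) size_map; lia.
rewrite (Hw i.+1 i Hi) /= L1 iter_cells -/c.
have Ei : i = 4 * (i %/ 4) + i %% 4 by rewrite {1}(divn_eq i 4); lia.
have Hr : i %% 4 < 4 by apply: ltn_pmod.
rewrite {1}Ei (L3 _ (all_gw c)) ?size_map //; last by lia.
rewrite (nth_map 0); last by lia.
rewrite Hpre; last by lia.
by rewrite /tau /uu /= !inordK ?v_lt.
Qed.

Theorem mainTheorem5 :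
  (forall w : nat -> letter, is_psi_limit la w -> automatic 7 w) /\
  (forall w : nat -> letter, is_psi_limit lb w -> automatic 7 w).
Proof.
split.
- move=> w Hw; apply: (main la 0 w) => //.
  by move=> [|k].
- move=> w Hw; apply: (main lb 1 w) => //.
  move=> [|[|k]] // _.
Qed.
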